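(* Let $d=1$. There is a constant $c_1$ depending only on the dimension such that for all $N\ge1$, $$\text{i) } E_Q(Z(N)^2)\le \sum_{n=0}^N\left(c_1c^2_{N,1}N^{1/2}\right)^n,\qquad \text{ii) } E_Q(K(N)^2)\le N^2\sum_{n=0}^N\left(c_1c^2_{N,1}N^{1/2}\right)^n.$$
   Context: $P^N_0$ is the uniform probability measure on nearest-neighbour walks $\omega:\{0,\dots,N\}\to\mathbb{Z}$ with $\omega(0)=0$, $|\omega(n)-\omega(n-1)|=1$ (each of weight $2^{-N}$). The environment $h=\{h(n,x):n\in\mathbb{N},x\in\mathbb{Z}\}$ consists of i.i.d. random variables with $h(n,x)=\pm1$ each with probability $1/2$ on a probability space $(H,\mathcal{G},Q)$, independent of the walk; $E_Q$ is expectation under $Q$. $(c_{N,1})$ is a sequence of positive numbers with $\lim_{N\to\infty}c_{N,1}^2N^{1/2}=0$. $Z(N)=\int\prod_{n=1}^N[1+c_{N,1}h(n,\omega(n))]\,dP^N_0(\omega)$ and $K(N)=\int\prod_{n=1}^N[1+c_{N,1}h(n,\omega(n))]\,\omega(N)^2\,dP^N_0(\omega)$. *)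

(* Defs.v *)
From HB Require Import structures.
From mathcomp Require Import all_boot all_order all_algebra.
From mathcomp Require Import all_classical all_reals all_analysis.
Set Implicit Arguments. Unset Strict Implicit. Unset Printing Implicit Defensive.
Import Order.TTheory GRing.Theory Num.Theory.
Local Open Scope ring_scope.

(* d = 1.  A nearest-neighbour walk of length N on Z started at 0 is encoded
   by its sequence of steps: step i (i < N) is +1 if true, -1 if false.
   The uniform measure P^N_0 gives each such walk weight 2^-N. *)
Definition walk (N : nat) := {ffun 'I_N -> bool}.

Definition wpos (N : nat) (w : walk N) (n : nat) : int :=
  \sum_(i < N | (i < n)%N) (if w i then 1 else -1).

(* Environment restricted to the finite box that the walks can see:
   times n = 1..N (index n-1) and sites x with |x| <= N (index x+N).
   Each h(n,x) = +1 (true) or -1 (false). *)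
Definition env (N : nat) := {ffun 'I_N -> {ffun 'I_(N + N).+1 -> bool}}.

(* h(n, x) for n = i+1 (i : 'I_N) and site x; x is only used with |x| <= N. *)
Definition hval {R : realType} (N : nat) (h : env N) (i : 'I_N) (x : int) : R :=
  if h i (inord (absz (x + N%:Z))) then 1 else -1.

Definition Zpart {R : realType} (N : nat) (c : R) (h : env N) : R :=
  (2%:R ^- N) * \sum_(w : walk N)
     \prod_(i < N) (1 + c * hval h i (wpos w i.+1)).

Definition Kpart {R : realType} (N : nat) (c : R) (h : env N) : R :=
  (2%:R ^- N) * \sum_(w : walk N)
     (\prod_(i < N) (1 + c * hval h i (wpos w i.+1))) * ((wpos w N)%:~R ^+ 2).

(* E_Q of a function of the (finitely many relevant) i.i.d. uniform +-1
   variables h(n,x): average over all sign assignments on the box. *)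
Definition EQ {R : realType} (N : nat) (f : env N -> R) : R :=
  (#|{: env N}|%:R)^-1 * \sum_(h : env N) f h.

(* Main.v *)
Require Import Defs.
From HB Require Import structures.
From mathcomp Require Import all_boot all_order all_algebra.
From mathcomp Require Import all_classical all_reals all_analysis.
From mathcomp Require Import ring lra zify.
Import Order.TTheory GRing.Theory Num.Theory.
Import numFieldNormedType.Exports.
Local Open Scope classical_set_scope.
Local Open Scope ring_scope.

Definition avg4 {R : realType} (F : int -> int -> R) (a b : int) : R :=
  (F (a+1) (b+1) + F (a+1) (b-1) + F (a-1) (b+1) + F (a-1) (b-1)) / 4%:R.
Definition ceq {R : realType} (x y : int) : R := (x == y)%:R.
Fixpoint V {R : realType} (u : R) (G : int -> int -> R) (N : nat) : int -> int -> R :=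
  match N with 0 => G | N'.+1 => avg4 (fun x y => (1 + u * ceq x y) * V u G N' x y) end.
Definition Q {R : realType} (t : nat) (a b : int) : R := V 0 ceq t a b.

Definition shinv {R : realType} (G : int -> int -> R) :=
  forall x y k, G (x + k) (y + k) = G x y.

Lemma ceq_shinv (R : realType) : shinv (@ceq R).
Proof. by move=> x y k; rewrite /ceq (inj_eq (addIr k)). Qed.

Lemma V_shift (R : realType) (u : R) G N a b k : shinv G ->
  V u G N (a + k) (b + k) = V u G N a b.
Proof.
move=> HG; elim: N a b => [|N IH] a b /=; first exact: HG.
rewrite /avg4 !(addrAC _ k) !IH !ceq_shinv //.
Qed.

Lemma V_diag (R : realType) (u : R) G N a : shinv G -> V u G N a a = V u G N 0 0.
Proof. by move=> HG; have := @V_shift R u G N 0 0 a HG; rewrite !add0r. Qed.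

Lemma V0S (R : realType) (G : int -> int -> R) N a b :
  V 0 G N.+1 a b = avg4 (V 0 G N) a b.
Proof. by rewrite /= /avg4 !mul0r !addr0 !mul1r. Qed.

Lemma avg4D (R : realType) (F1 F2 : int -> int -> R) a b :
  avg4 (fun x y => F1 x y + F2 x y) a b = avg4 F1 a b + avg4 F2 a b.
Proof. rewrite /avg4; rewrite -mulrDl; congr (_ / _); lra. Qed.

Lemma avg4M (R : realType) (c : R) (F : int -> int -> R) a b :
  avg4 (fun x y => c * F x y) a b = c * avg4 F a b.
Proof. rewrite /avg4 mulrA; congr (_ / _); rewrite !mulrDr //. Qed.

Lemma avg4Mr (R : realType) (c : R) (F : int -> int -> R) a b :
  avg4 (fun x y => F x y * c) a b = avg4 F a b * c.
Proof. rewrite mulrC -avg4M; congr avg4; apply/funext=> x; apply/funext=> y; exact: mulrC. Qed.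

Lemma avg4_sum (R : realType) (n : nat) (F : nat -> int -> int -> R) a b :
  avg4 (fun x y => \sum_(0 <= t < n) F t x y) a b = \sum_(0 <= t < n) avg4 (F t) a b.
Proof.
elim: n => [|n IH]; first by rewrite /avg4 !big_geq // !addr0 mul0r.
rewrite big_nat_recr //= -IH -avg4D; congr avg4.
by apply/funext=> x; apply/funext=> y; rewrite big_nat_recr.
Qed.

Lemma renewal (R : realType) (u : R) G N a b : shinv G ->
  V u G N a b = V 0 G N a b + u * \sum_(0 <= t < N) Q t.+1 a b * V u G (N - t.+1) 0 0.
Proof.
move=> HG; elim: N a b => [|N IH] a b; first by rewrite big_geq // mulr0 addr0.
have E : (fun x y => (1 + u * ceq x y) * V u G N x y) =
   (fun x y => (V 0 G N x y + u * \sum_(0 <= t < N) Q t.+1 x y * V u G (N - t.+1) 0 0)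
     + u * (ceq x y * V u G N 0 0)).
  apply/funext=> x; apply/funext=> y; rewrite -IH mulrDl mul1r; congr (_ + _).
  rewrite /ceq; case E: (_ == _); last by rewrite /= mulr0 !mul0r mulr0.
  by move/eqP: E => ->; rewrite V_diag // mulrA.
rewrite /= E avg4D avg4D avg4M avg4M avg4_sum -V0S.
rewrite big_nat_recl // subSS subn0 -addrA; congr (_ + _).
rewrite mulrDr addrC; congr (_ + _).
  by congr (_ * _); rewrite avg4Mr /Q V0S.
congr (_ * _); apply: eq_bigr => t _.
by rewrite avg4Mr /Q V0S subSS.
Qed.
Definition Bz {R : realType} (n : nat) (z : int) : R :=
  match z with Posz k => ('C(n, k))%:R | Negz _ => 0 end.

Lemma Bz_pascal (R : realType) n z : @Bz R n.+1 (z + 1) = Bz n z + Bz n (z + 1).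
Proof.
case: z => [k|[|k]].
- by rewrite -PoszD addn1 /= binS natrD addrC.
- have -> : Negz 0 + 1 = 0 by rewrite NegzE addNr.
  by rewrite /= !bin0 add0r.
- have -> : Negz k.+1 + 1 = Negz k by rewrite !NegzE; ring.
  by rewrite /= addr0.
Qed.

Lemma Q_closed (R : realType) t a b m : a - b = m *+ 2 ->
  @Q R t a b = Bz (t.*2) (t%:Z + m) / 4%:R ^+ t.
Proof.
elim: t a b m => [|t IH] a b m Hab.
  rewrite /Q /= /ceq expr0 divr1 add0r.
  case: m Hab => [k|k] Hab /=.
  - case: k Hab => [|k] Hab.
      by move/eqP: Hab; rewrite mul0rn subr_eq0 => ->.
    have -> : (a == b) = false.
      by apply/negbTE/eqP => E; move: Hab; rewrite E subrr => /esym/eqP; rewrite mulrn_eq0.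
    by rewrite bin0n.
  - have -> : (a == b) = false.
      by apply/negbTE/eqP => E; move: Hab; rewrite E subrr => /esym/eqP; rewrite mulrn_eq0.
    by [].
rewrite /Q V0S /avg4 -!/(Q _ _ _).
rewrite (IH _ _ m); last by rewrite -Hab; ring.
rewrite (IH _ _ (m + 1)); last by rewrite mulrnDl -Hab; ring.
rewrite (IH _ _ (m - 1)); last by rewrite mulrnBl -Hab; ring.
rewrite (IH _ _ m); last by rewrite -Hab; ring.
set z := t%:Z + m - 1.
have E1 : t%:Z + m = z + 1 by rewrite /z; ring.
have E2 : t%:Z + (m + 1) = z + 1 + 1 by rewrite /z; ring.
have E3 : t%:Z + (m - 1) = z by rewrite /z; ring.
have E4 : t.+1%:Z + m = z + 1 + 1 by rewrite /z -addn1 PoszD; ring.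
rewrite E1 E2 E3 E4 doubleS Bz_pascal !Bz_pascal exprS.
field; by rewrite expf_neq0 // pnatr_eq0.
Qed.
Definition ac {R : realType} (t : nat) : R := ('C(t.*2, t))%:R / 4%:R ^+ t.

Lemma Q00 (R : realType) t : @Q R t 0 0 = ac t.
Proof. by rewrite (@Q_closed R t 0 0 0) ?addr0 ?subrr ?mul0rn. Qed.

Lemma bin_rec t : ('C(t.+1.*2, t.+1) * t.+1 = 2 * (t.*2.+1 * 'C(t.*2, t)))%N.
Proof.
have h1 := mul_bin_diag (t.*2.+2) t.
have h2 := mul_bin_down (t.*2.+1) t.
rewrite /= in h1 h2.
have e : (t.*2.+1 - t = t.+1)%N by rewrite -addnn; lia.
rewrite e in h2; rewrite doubleS.
move: h1 h2; set X := 'C(_.+1, t); set c := 'C(t.*2, t); set c' := 'C(_, t.+1).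
rewrite -!addnn; nia.
Qed.

Lemma ac_rec (R : realType) t : @ac R t.+1 * (t.+1.*2)%:R = ac t * (t.*2.+1)%:R.
Proof.
have := bin_rec t; move/(congr1 (fun n => n%:R : R)); rewrite !natrM => h.
have Ht : (t.+1)%:R != 0 :> R by rewrite pnatr_eq0.
have hc : ('C(t.+1.*2, t.+1))%:R = 2%:R * ((t.*2.+1)%:R * ('C(t.*2, t))%:R) / (t.+1)%:R :> R.
  by rewrite -h mulfK.
rewrite /ac hc exprS.
have -> : (t.+1.*2)%:R = 2%:R * (t.+1)%:R :> R by rewrite -natrM mul2n.
have H4 : (4%:R ^+ t : R) != 0 by rewrite expf_neq0 // pnatr_eq0.
have -> : (4%:R : R) = 2%:R * 2%:R by rewrite -natrM.
by field; rewrite -natrM H4 /= addrC natr1.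
Qed.
Lemma ac_ge0 (R : realType) t : 0 <= @ac R t.
Proof. by rewrite /ac divr_ge0 // exprn_ge0. Qed.

Lemma ac_sq (R : realType) t : @ac R t ^+ 2 * (t.*2.+1)%:R <= 1.
Proof.
elim: t => [|t IH]; first by rewrite /ac /= bin0 expr0 divr1 expr1n mul1r.
have h := ac_rec R t.
have a0 := ac_ge0 R t; have a1 := ac_ge0 R t.+1.
set x := (t%:R : R).
have x0 : 0 <= x by rewrite /x ler0n.
have e1 : (t.*2.+1)%:R = 2 * x + 1 :> R by rewrite /x -addnn ?addnS ?addSn -!natr1 !natrD; lra.
have e2 : (t.+1.*2)%:R = 2 * x + 2 :> R by rewrite /x -addnn ?addnS ?addSn -!natr1 !natrD; lra.
have e3 : (t.+1.*2.+1)%:R = 2 * x + 3 :> R by rewrite /x -addnn ?addnS ?addSn -!natr1 !natrD; lra.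
rewrite e3; rewrite e1 in IH; rewrite e1 e2 in h.
move: h IH a0 a1; set A := ac t; set A' := ac t.+1 => h IH a0 a1.
have E : A' ^+ 2 * (2 * x + 2) ^+ 2 = A ^+ 2 * (2 * x + 1) ^+ 2.
  by rewrite -!exprMn h.
have P : 0 < (2 * x + 2) ^+ 2 by rewrite exprn_gt0 //; lra.
rewrite -(ler_pM2r P) mul1r mulrAC E.
have Bp : 0 <= A ^+ 2 by rewrite sqr_ge0.
move: Bp IH; set B := A ^+ 2 => Bp IH.
have Y : 0 <= (2 * x + 1) * (2 * x + 3) by nra.
have Z : B * (2 * x + 1) ^+ 2 * (2 * x + 3) = (B * (2 * x + 1)) * ((2 * x + 1) * (2 * x + 3)).
  by ring.
rewrite Z; apply: le_trans (_ : 1 * ((2 * x + 1) * (2 * x + 3)) <= _).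
  by rewrite ler_wpM2r.
nra.
Qed.

Lemma sum_ac (R : realType) N : \sum_(0 <= t < N) @ac R t.+1 <= 2 * Num.sqrt (N%:R).
Proof.
elim: N => [|N IH]; first by rewrite big_geq // sqrtr0 mulr0.
rewrite big_nat_recr //=.
set p := Num.sqrt (N%:R : R); set q := Num.sqrt (N.+1%:R : R).
have p0 : 0 <= p := sqrtr_ge0 _.
have q0 : 0 <= q := sqrtr_ge0 _.
have pp : p ^+ 2 = N%:R by rewrite sqr_sqrtr // ler0n.
have qq : q ^+ 2 = N%:R + 1 by rewrite sqr_sqrtr ?ler0n // -natr1.
have A0 := ac_ge0 R N.+1.
have Hs := ac_sq R N.+1.
have e3 : (N.+1.*2.+1)%:R = 2 * N%:R + 3 :> R by rewrite -addnn ?addnS ?addSn -!natr1 !natrD; lra.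
rewrite e3 in Hs.
move: A0 Hs; set A := ac N.+1 => A0 Hs.
have N0 : 0 <= (N%:R : R) by rewrite ler0n.
have Aq : (A * q) ^+ 2 <= 1 by rewrite exprMn qq; nra.
have Aq1 : A * q <= 1.
  have : 0 <= A * q by rewrite mulr_ge0.
  nra.
have pq : 2 * p * q <= p ^+ 2 + q ^+ 2 by nra.
have q1 : 0 < q by rewrite sqrtr_gt0 ltr0n.
have IH2 : \sum_(0 <= i < N) ac i.+1 <= 2 * p := IH.
suff : A <= 2 * q - 2 * p by lra.
rewrite -(ler_pM2r q1).
have : 1 <= (2 * q - 2 * p) * q.
  have -> : (2 * q - 2 * p) * q = 2 * q ^+ 2 - 2 * p * q by ring.
  rewrite qq; rewrite pp in pq; rewrite qq in pq; lra.
lra.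
Qed.
Definition Tg {R : realType} (y : R) (n : nat) : R := \sum_(0 <= k < n) y ^+ k.

Lemma Tg_mono (R : realType) (y y' : R) m n : 0 <= y' -> y' <= y -> (m <= n)%N ->
  Tg y' m <= Tg y n.
Proof.
move=> y0 yy mn; rewrite /Tg (big_cat_nat (leq0n m) mn) /=.
rewrite -[X in X <= _]addr0 lerD //.
  apply: ler_sum_nat => i _; apply: lerXn2r; rewrite ?nnegrE //.
  exact: le_trans yy.
by apply: sumr_ge0 => i _; apply: exprn_ge0; exact: le_trans yy.
Qed.

Lemma TgS (R : realType) (y : R) n : Tg y n.+1 = 1 + y * Tg y n.
Proof.
rewrite /Tg big_nat_recl // expr0 mulr_sumr; congr (_ + _).
by apply: eq_bigr => i _; rewrite exprS.
Qed.

Definition one2 {R : realType} : int -> int -> R := fun _ _ => 1.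

Lemma one2_shinv (R : realType) : shinv (@one2 R).
Proof. by []. Qed.

Lemma V0_one (R : realType) N a b : V 0 (@one2 R) N a b = 1.
Proof.
elim: N a b => [|N IH] a b //; rewrite V0S /avg4 !IH; by field.
Qed.

Definition Ff {R : realType} (u : R) N := V u (@one2 R) N 0 0.

Lemma Ff_ren (R : realType) (u : R) N :
  Ff u N = 1 + u * \sum_(0 <= t < N) ac t.+1 * Ff u (N - t.+1).
Proof.
rewrite /Ff renewal ?V0_one //; congr (_ + _ * _).
by apply: eq_bigr => t _; rewrite Q00.
Qed.

Lemma Ff_bound (R : realType) (u : R) N : 0 <= u ->
  Ff u N - 1 <= 2 * u * Num.sqrt (N%:R) * Tg (2 * u * Num.sqrt (N%:R)) N.
Proof.
move=> u0; elim/ltn_ind: N => N IH.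
rewrite Ff_ren addrAC subrr add0r.
set y := 2 * u * Num.sqrt (N%:R).
have step : forall t, (t < N)%N -> ac t.+1 * Ff u (N - t.+1) <= ac t.+1 * Tg y N.
  move=> t tN; apply: ler_wpM2l; first exact: ac_ge0.
  have HM := IH (N - t.+1)%N ltac:(lia).
  apply: le_trans (_ : 1 + (2 * u * Num.sqrt ((N - t.+1)%N%:R) * Tg (2 * u * Num.sqrt ((N - t.+1)%N%:R)) (N - t.+1)) <= _).
    by rewrite -lerBlDl; apply: HM; lia.
  rewrite -TgS; apply: Tg_mono.
  - by rewrite !mulr_ge0 // sqrtr_ge0.
  - by rewrite /y ler_wpM2l ?mulr_ge0 // ler_wsqrtr // ler_nat leq_subr.
  - lia.
apply: le_trans (_ : u * (\sum_(0 <= t < N) ac t.+1 * Tg y N) <= _).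
  rewrite ler_wpM2l //; apply: ler_sum_nat => t /andP [_ tN]; exact: step.
rewrite -mulr_suml.
have S := sum_ac R N.
have T0 : 0 <= Tg y N.
  by apply: sumr_ge0 => i _; apply: exprn_ge0; rewrite /y !mulr_ge0 // sqrtr_ge0.
have -> : 2 * u * Num.sqrt (N%:R) * Tg y N = u * (2 * Num.sqrt (N%:R) * Tg y N) by ring.
by rewrite ler_wpM2l // ler_wpM2r.
Qed.
Lemma V_ge0 (R : realType) (u : R) G N a b : 0 <= u -> (forall x y, 0 <= G x y) ->
  0 <= V u G N a b.
Proof.
move=> u0 G0; elim: N a b => [|N IH] a b //=.
have c0 : forall x y, 0 <= ceq x y :> R by move=> x y; rewrite /ceq ler0n.
have t0 : forall x y, 0 <= (1 + u * ceq x y) * V u G N x y.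
  by move=> x y; rewrite mulr_ge0 // addr_ge0 // mulr_ge0.
rewrite /avg4 divr_ge0 // !addr_ge0 //.
Qed.

Lemma V_ge1 (R : realType) (u : R) N a b : 0 <= u -> 1 <= V u (@one2 R) N a b.
Proof.
move=> u0; elim: N a b => [|N IH] a b //=.
have c0 : forall x y, 0 <= ceq x y :> R by move=> x y; rewrite /ceq ler0n.
have t1 : forall x y, 1 <= (1 + u * ceq x y) * V u one2 N x y.
  move=> x y; have := IH x y.
  have := mulr_ge0 (mulr_ge0 u0 (c0 x y)) (le_trans ler01 (IH x y)).
  rewrite mulrDl mul1r; lra.
rewrite /avg4 ler_pdivlMr ?ltr0n // mul1r.
have := t1 (a+1) (b+1); have := t1 (a+1) (b-1); have := t1 (a-1) (b+1); have := t1 (a-1) (b-1).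
lra.
Qed.

Definition rr {R : realType} (N : nat) (d : R) : R :=
  d ^+ 4 + 12%:R * N%:R * d ^+ 2 + 12%:R * N%:R ^+ 2 - 4%:R * N%:R.

Definition Gd {R : realType} : int -> int -> R := fun x y => ((x - y)%:~R) ^+ 4.
Definition Gs {R : realType} : int -> int -> R := fun x y => ((x + y)%:~R) ^+ 4.
Definition Gxy {R : realType} : int -> int -> R := fun x y => (x%:~R) ^+ 2 * (y%:~R) ^+ 2.

Lemma Gd_shinv (R : realType) : shinv (@Gd R).
Proof. by move=> x y k; rewrite /Gd; congr (_ ^+ _); congr intmul; ring. Qed.

Lemma V0_Gd (R : realType) N a b : V 0 (@Gd R) N a b = rr N ((a - b)%:~R).
Proof.
elim: N a b => [|N IH] a b; first by rewrite /= /Gd /rr; ring.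
rewrite V0S /avg4 !IH.
have -> : a + 1 - (b + 1) = a - b by ring.
have -> : a + 1 - (b - 1) = (a - b) + 2 by ring.
have -> : a - 1 - (b + 1) = (a - b) - 2 by ring.
have -> : a - 1 - (b - 1) = (a - b) by ring.
rewrite intrD intrB; set d := (a - b)%:~R.
rewrite /rr -natr1; by field.
Qed.

Lemma V0_Gs (R : realType) N a b : V 0 (@Gs R) N a b = rr N ((a + b)%:~R).
Proof.
elim: N a b => [|N IH] a b; first by rewrite /= /Gs /rr; ring.
rewrite V0S /avg4 !IH.
have -> : a + 1 + (b + 1) = (a + b) + 2 by ring.
have -> : a + 1 + (b - 1) = a + b by ring.
have -> : a - 1 + (b + 1) = a + b by ring.
have -> : a - 1 + (b - 1) = (a + b) - 2 by ring.
rewrite intrD intrB; set d := (a + b)%:~R.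
rewrite /rr -natr1; by field.
Qed.

Lemma V0_Gxy (R : realType) N a b :
  V 0 (@Gxy R) N a b = ((a%:~R) ^+ 2 + N%:R) * ((b%:~R) ^+ 2 + N%:R).
Proof.
elim: N a b => [|N IH] a b; first by rewrite /= /Gxy !addr0.
rewrite V0S /avg4 !IH !intrD ?intrB -natr1; by field.
Qed.
Definition Phi {R : realType} (u : R) N := V u (@Gd R) N 0 0.

Lemma rr0 (R : realType) N : @rr R N 0 = 12%:R * N%:R ^+ 2 - 4%:R * N%:R.
Proof. by rewrite /rr; ring. Qed.

Lemma Phi_ren (R : realType) (u : R) N :
  Phi u N = rr N 0 + u * \sum_(0 <= t < N) ac t.+1 * Phi u (N - t.+1).
Proof.
rewrite /Phi (@renewal R u Gd N 0 0 (@Gd_shinv R)) V0_Gd subrr; congr (_ + _ * _).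
by apply: eq_bigr => t _; rewrite Q00.
Qed.

Lemma Phi_step (R : realType) (u : R) N : 0 <= u ->
  (forall M, (M < N)%N -> Phi u M <= 12%:R * M%:R ^+ 2 * Ff u M) ->
  Phi u N - rr N 0 <= 12%:R * N%:R ^+ 2 * (Ff u N - 1).
Proof.
move=> u0 IH.
rewrite Phi_ren addrAC subrr add0r Ff_ren addrAC subrr add0r.
rewrite mulrCA ler_wpM2l // mulr_sumr.
apply: ler_sum_nat => t /andP [_ tN].
rewrite [X in _ <= X]mulrCA ler_wpM2l ?ac_ge0 //.
apply: le_trans (IH (N - t.+1)%N ltac:(lia)) _.
apply: ler_wpM2r; first by apply: V_ge0.
by rewrite ler_wpM2l ?ler0n // lerXn2r ?nnegrE ?ler0n // ler_nat leq_subr.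
Qed.

Lemma Phi_le (R : realType) (u : R) N : 0 <= u -> Phi u N <= 12%:R * N%:R ^+ 2 * Ff u N.
Proof.
move=> u0; elim/ltn_ind: N => N IH.
have := @Phi_step R u N u0 IH; rewrite rr0.
have N0 : 0 <= (N%:R : R) by rewrite ler0n.
have : 0 <= 4%:R * (N%:R : R) by rewrite mulr_ge0 // ler0n.
lra.
Qed.

Lemma Phi_diff (R : realType) (u : R) N : 0 <= u ->
  Phi u N - rr N 0 <= 12%:R * N%:R ^+ 2 * (Ff u N - 1).
Proof. by move=> u0; apply: Phi_step => // M _; apply: Phi_le. Qed.
Definition m4 {R : realType} (s : R) (N : nat) : R :=
  s ^+ 4 + 24%:R * N%:R * s ^+ 2 + 48%:R * N%:R ^+ 2 - 32%:R * N%:R.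

Lemma nat_sq_ge (R : realType) (N : nat) : (N%:R : R) <= N%:R ^+ 2.
Proof.
case: N => [|n]; first by rewrite expr0n.
have h : 1 <= (n.+1%:R : R) by rewrite ler1n.
by rewrite expr2 ler_peMr // (le_trans ler01).
Qed.

Lemma rr_le_m4 (R : realType) N (s : R) : rr N s <= m4 s N.
Proof.
rewrite /rr /m4.
have := nat_sq_ge R N.
have N0 : 0 <= (N%:R : R) by rewrite ler0n.
have : 0 <= (N%:R : R) * s ^+ 2 by rewrite mulr_ge0 // sqr_ge0.
lra.
Qed.

Lemma m4S (R : realType) (s : R) N :
  m4 (s + 2%:R) N + m4 (s - 2%:R) N = 2%:R * m4 s N.+1.
Proof. by rewrite /m4 -natr1; ring. Qed.

Lemma m4_mono (R : realType) (s : R) N : m4 s N <= m4 s N.+1.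
Proof.
rewrite /m4 -natr1.
have N0 : 0 <= (N%:R : R) by rewrite ler0n.
have : 0 <= s ^+ 2 by rewrite sqr_ge0.
nra.
Qed.

Definition Dl {R : realType} (u : R) N a b := V u (@Gs R) N a b - V 0 (@Gs R) N a b.
Definition ff {R : realType} (u : R) N a b := V u (@one2 R) N a b.

Lemma Spiece (R : realType) (u : R) N a b : 0 <= u ->
  Dl u N a b <= m4 ((a + b)%:~R) N * (ff u N a b - 1).
Proof.
move=> u0; elim: N a b => [|N IH] a b.
  by rewrite /Dl /ff /= subrr /one2 subrr mulr0.
have term : forall x y, (1 + u * ceq x y) * V u Gs N x y - V 0 Gs N x y <=
    m4 ((x + y)%:~R) N * ((1 + u * ceq x y) * ff u N x y - 1).
  move=> x y.
  have c0 : 0 <= ceq x y :> R by rewrite /ceq ler0n.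
  have uc : 0 <= u * ceq x y by rewrite mulr_ge0.
  have h1 := IH x y; rewrite /Dl in h1.
  have h1' := ler_wpM2l (addr_ge0 ler01 uc) h1.
  have h2 : V 0 (@Gs R) N x y <= m4 ((x + y)%:~R) N by rewrite V0_Gs rr_le_m4.
  have h2' := ler_wpM2l uc h2.
  move: h1' h2'; set A := V u Gs N x y; set B := V 0 Gs N x y; set m := m4 _ N;
    set f := ff u N x y; set c := u * ceq x y.
  move=> h1' h2'.
  have -> : (1 + c) * A - B = (1 + c) * (A - B) + c * B by ring.
  have -> : m * ((1 + c) * f - 1) = (1 + c) * (m * (f - 1)) + c * m by ring.
  lra.
rewrite /Dl /ff V0S /= /avg4.
have t1 := term (a + 1) (b + 1); have t2 := term (a + 1) (b - 1).
have t3 := term (a - 1) (b + 1); have t4 := term (a - 1) (b - 1).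
rewrite (_ : a + 1 + (b + 1) = a + b + 2) in t1; last by ring.
rewrite (_ : a + 1 + (b - 1) = a + b) in t2; last by ring.
rewrite (_ : a - 1 + (b + 1) = a + b) in t3; last by ring.
rewrite (_ : a - 1 + (b - 1) = a + b - 2) in t4; last by ring.
rewrite intrD in t1; rewrite intrB in t4.
have e2 : (2%:~R : R) = 2%:R by [].
rewrite e2 in t1 t4.
have F14 : ff u N (a + 1) (b + 1) = ff u N (a - 1) (b - 1).
  rewrite /ff -(@V_shift R u one2 N (a - 1) (b - 1) 2 (@one2_shinv R)).
  by congr V; ring.
have C14 : ceq (a + 1) (b + 1) = ceq (a - 1) (b - 1) :> R.
  rewrite -(@ceq_shinv R (a - 1) (b - 1) 2); congr ceq; ring.
rewrite -F14 -C14 in t4.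
set s := (a + b)%:~R : R.
have g0 : forall x y, 0 <= (1 + u * ceq x y) * ff u N x y - 1.
  move=> x y; have := @V_ge1 R u N x y u0; rewrite -/(ff u N x y).
  have c0 : 0 <= ceq x y :> R by rewrite /ceq ler0n.
  have := mulr_ge0 (mulr_ge0 u0 c0) (le_trans ler01 (@V_ge1 R u N x y u0)).
  rewrite /ff mulrDl mul1r; lra.
have g2 := g0 (a + 1) (b - 1); have g3 := g0 (a - 1) (b + 1).
have g1 := g0 (a + 1) (b + 1).
have M := @m4S R s N; have Mm := @m4_mono R s N.
have P2 := ler_wpM2r g2 Mm; have P3 := ler_wpM2r g3 Mm.
rewrite -C14 -[V u one2 N (a - 1) (b - 1)]/(ff u N (a - 1) (b - 1)) -F14.
rewrite -[V u one2 N (a + 1) (b + 1)]/(ff u N (a + 1) (b + 1)).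
rewrite -[V u one2 N (a + 1) (b - 1)]/(ff u N (a + 1) (b - 1)).
rewrite -[V u one2 N (a - 1) (b + 1)]/(ff u N (a - 1) (b + 1)).
move: t1 t2 t3 t4 g1 g2 g3 M Mm P2 P3.
set F1 := (1 + u * ceq (a + 1) (b + 1)) * ff u N (a + 1) (b + 1).
set F2 := (1 + u * ceq (a + 1) (b - 1)) * ff u N (a + 1) (b - 1).
set F3 := (1 + u * ceq (a - 1) (b + 1)) * ff u N (a - 1) (b + 1).
set m1 := m4 (s + 2%:R) N; set m4' := m4 (s - 2%:R) N; set m := m4 s N; set m' := m4 s N.+1.
move=> t1 t2 t3 t4 g1 g2 g3 M Mm P2 P3.
have E : m1 * (F1 - 1) + m4' * (F1 - 1) = 2%:R * m' * (F1 - 1) by rewrite -mulrDl M.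
lra.
Qed.
Lemma V_add (R : realType) (u : R) G1 G2 N a b :
  V u (fun x y => G1 x y + G2 x y) N a b = V u G1 N a b + V u G2 N a b.
Proof.
elim: N a b => [|N IH] a b //=; rewrite /avg4 !IH; by field.
Qed.

Lemma V_scale (R : realType) (u c : R) G N a b :
  V u (fun x y => c * G x y) N a b = c * V u G N a b.
Proof.
elim: N a b => [|N IH] a b //=; rewrite /avg4 !IH; by field.
Qed.

Lemma V_ge_V0 (R : realType) (u : R) H N a b : 0 <= u -> (forall x y, 0 <= H x y) ->
  V 0 H N a b <= V u H N a b.
Proof.
move=> u0 H0; elim: N a b => [|N IH] a b //.
rewrite V0S /= /avg4 ler_pM2r ?invr_gt0 ?ltr0n //.
have t : forall x y, V 0 H N x y <= (1 + u * ceq x y) * V u H N x y.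
  move=> x y; have := IH x y; have := @V_ge0 R u H N x y u0 H0.
  have c0 : 0 <= ceq x y :> R by rewrite /ceq ler0n.
  have := mulr_ge0 (mulr_ge0 u0 c0) (@V_ge0 R u H N x y u0 H0).
  rewrite mulrDl mul1r; lra.
have := t (a+1) (b+1); have := t (a+1) (b-1); have := t (a-1) (b+1); have := t (a-1) (b-1).
lra.
Qed.

Lemma Gxy_le (R : realType) x y : @Gxy R x y <= (Gs x y + Gd x y) / 16%:R.
Proof.
rewrite /Gxy /Gs /Gd intrD intrB ler_pdivlMr ?ltr0n //.
set X := x%:~R : R; set Y := y%:~R : R.
have h : 0 <= (X ^+ 2 - Y ^+ 2) ^+ 2 by rewrite sqr_ge0.
have -> : (X + Y) ^+ 4 + (X - Y) ^+ 4 = X ^+ 2 * Y ^+ 2 * 16%:R + 2%:R * (X ^+ 2 - Y ^+ 2) ^+ 2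
  by ring.
lra.
Qed.
Lemma dGxy (R : realType) (u : R) N : 0 <= u ->
  V u (@Gxy R) N 0 0 - V 0 (@Gxy R) N 0 0 <=
  ((V u (@Gs R) N 0 0 - V 0 (@Gs R) N 0 0) + (Phi u N - V 0 (@Gd R) N 0 0)) / 16%:R.
Proof.
move=> u0.
pose H := fun x y => (16%:R^-1 : R) * Gs x y + (16%:R^-1 * Gd x y + (-1) * Gxy x y).
have H0 : forall x y, 0 <= H x y.
  move=> x y; have := Gxy_le R x y; rewrite /H; lra.
have := @V_ge_V0 R u H N 0 0 u0 H0.
rewrite /H !V_add !V_scale /Phi; lra.
Qed.

Lemma Ff_ge1 (R : realType) (u : R) N : 0 <= u -> 1 <= Ff u N.
Proof. by move=> u0; apply: V_ge1. Qed.

Lemma partI (R : realType) (u : R) N : 0 <= u ->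
  Ff u N <= Tg (4%:R * (2%:R * u * Num.sqrt (N%:R))) N.+1.
Proof.
move=> u0; set y := 2%:R * u * Num.sqrt (N%:R).
have y0 : 0 <= y by rewrite /y !mulr_ge0 // sqrtr_ge0.
have := @Ff_bound R u N u0; rewrite -/y => h.
rewrite TgS.
have T := @Tg_mono R (4%:R * y) y N N y0 ltac:(lra) (leqnn N).
have T0 : 0 <= Tg y N by apply: sumr_ge0 => i _; apply: exprn_ge0.
have : y * Tg y N <= 4%:R * y * Tg (4%:R * y) N.
  apply: le_trans (_ : 4%:R * y * Tg y N <= _).
    by rewrite ler_wpM2r //; lra.
  by rewrite ler_wpM2l // mulr_ge0.
lra.
Qed.

Lemma partII (R : realType) (u : R) N : 0 <= u ->
  V u (@Gxy R) N 0 0 <= N%:R ^+ 2 * Tg (4%:R * (2%:R * u * Num.sqrt (N%:R))) N.+1.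
Proof.
move=> u0; set y := 2%:R * u * Num.sqrt (N%:R).
have y0 : 0 <= y by rewrite /y !mulr_ge0 // sqrtr_ge0.
have hF := @Ff_bound R u N u0; rewrite -/y in hF.
have F1 := @Ff_ge1 R u N u0.
have d := @dGxy R u N u0.
have eX : V 0 (@Gxy R) N 0 0 = N%:R ^+ 2 by rewrite V0_Gxy expr0n add0r expr2.
rewrite eX in d.
have hS := @Spiece R u N 0 0 u0; rewrite /Dl -/(Ff u N) in hS.
have hD := @Phi_diff R u N u0.
have eD : V 0 (@Gd R) N 0 0 = rr N 0 by rewrite V0_Gd subrr.
rewrite -eD in hD.
rewrite /m4 in hS.
set K := (N%:R : R) ^+ 2.
have K0 : 0 <= K by rewrite sqr_ge0.
have NK : 0 <= (N%:R : R) by rewrite ler0n.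
rewrite TgS.
have T := @Tg_mono R (4%:R * y) y N N y0 ltac:(lra) (leqnn N).
have T0 : 0 <= Tg y N by apply: sumr_ge0 => i _; apply: exprn_ge0.
have Y1 : y * Tg y N <= 4%:R * y * Tg (4%:R * y) N.
  apply: le_trans (_ : 4%:R * y * Tg y N <= _).
    by rewrite ler_wpM2r //; lra.
  by rewrite ler_wpM2l // mulr_ge0.
have e0 : ((0 : int) + 0)%:~R = 0 :> R by rewrite addr0.
rewrite e0 !expr0n /= ?mulr0 ?addr0 ?add0r /ff -/(Ff u N) -/K in hS.
rewrite -/K in hD d.
have yT : y * Tg y N <= y * Tg (4%:R * y) N by rewrite ler_wpM2l.
have KD : K * (Ff u N - 1) <= K * (y * Tg (4%:R * y) N).
  by rewrite ler_wpM2l //; lra.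
have ND : 0 <= N%:R * (Ff u N - 1) by rewrite mulr_ge0 //; lra.
have KD0 : 0 <= K * (Ff u N - 1) by rewrite mulr_ge0 //; lra.
lra.
Qed.
Definition sgb (b : bool) : int := if b then 1 else -1.

Definition wcons (N : nat) (b : bool) (w : walk N) : walk N.+1 :=
  [ffun i : 'I_N.+1 => if unlift ord0 i is Some j then w j else b].
Definition wtail (N : nat) (w : walk N.+1) : walk N := [ffun j => w (lift ord0 j)].
Arguments wcons {N}.
Arguments wtail {N}.

Lemma sum_walkS (R : realType) N (F : walk N.+1 -> R) :
  \sum_(w : walk N.+1) F w = \sum_(b : bool) \sum_(w : walk N) F (wcons b w).
Proof.
rewrite pair_bigA /=.
pose h := fun p : bool * walk N => wcons p.1 p.2.
pose g := fun w : walk N.+1 => (w ord0, wtail w).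
have hg : cancel h g.
  move=> [b w]; rewrite /h /g /wtail /wcons /=; congr pair.
    by rewrite ffunE unlift_none.
  by apply/ffunP => j; rewrite !ffunE liftK.
have gh : cancel g h.
  move=> w; apply/ffunP => i; rewrite /h /g /wcons /wtail ffunE /=.
  by case: (unliftP ord0 i) => [j ->|->]; rewrite ?ffunE.
rewrite (reindex h) /=; last by exists g => x _.
by apply: eq_bigr => -[b w].
Qed.

Lemma wpos0 N (w : walk N) : wpos w 0 = 0.
Proof. by rewrite /wpos big_pred0. Qed.

Lemma wpos_cons N b (w : walk N) k : wpos (wcons b w) k.+1 = sgb b + wpos w k.
Proof.
rewrite /wpos big_mkcond big_ord_recl /= /wcons ffunE unlift_none.
congr (_ + _); rewrite [RHS]big_mkcond; apply: eq_bigr => i _.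
by rewrite ffunE liftK.
Qed.
Definition WS {R : realType} (u : R) (G : int -> int -> R) N (a b : int) : R :=
  \sum_(w : walk N) \sum_(w' : walk N)
    (\prod_(i < N) (1 + u * ceq (a + wpos w i.+1) (b + wpos w' i.+1))) * G (a + wpos w N) (b + wpos w' N).

Lemma WS_S (R : realType) (u : R) G N a b :
  WS u G N.+1 a b = \sum_(b1 : bool) \sum_(b2 : bool)
     (1 + u * ceq (a + sgb b1) (b + sgb b2)) * WS u G N (a + sgb b1) (b + sgb b2).
Proof.
rewrite /WS sum_walkS; apply: eq_bigr => b1 _.
under eq_bigr do rewrite sum_walkS.
rewrite exchange_big /=; apply: eq_bigr => b2 _.
rewrite mulr_sumr; apply: eq_bigr => w _; rewrite mulr_sumr; apply: eq_bigr => w' _.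
rewrite big_ord_recl /= !wpos_cons !wpos0 !addr0 -mulrA; congr (_ * _).
rewrite !addrA; congr (_ * _); apply: eq_bigr => i _.
by rewrite /bump add1n !wpos_cons !addrA.
Qed.

Lemma WS_V (R : realType) (u : R) G N a b : WS u G N a b = 4%:R ^+ N * V u G N a b.
Proof.
elim: N a b => [|N IH] a b.
  rewrite /WS expr0 mul1r /=.
  pose w0 : walk 0 := [ffun i => false].
  have all0 : forall w : walk 0, w = w0 by move=> w; apply/ffunP => -[].
  rewrite (big_pred1 w0) ?(big_pred1 w0) ?big_ord0 ?mul1r ?wpos0 ?addr0 //;
    by move=> w; rewrite /= (all0 w) eqxx.
rewrite WS_S !big_bool /= !IH /avg4.
rewrite /sgb.
have h4 : (4%:R : R) != 0 by rewrite pnatr_eq0.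
by rewrite exprS; field.
Qed.
Definition sgR {R : realType} (b : bool) : R := if b then 1 else -1.

Definition flip (M : nat) (p : 'I_M) (g : {ffun 'I_M -> bool}) : {ffun 'I_M -> bool} :=
  [ffun j => if j == p then ~~ g j else g j].

Arguments flip {M}.
Lemma flipK M p : involutive (@flip M p).
Proof.
move=> g; apply/ffunP => j; rewrite !ffunE.
by case: (j == p) => //; rewrite negbK.
Qed.

Lemma sum_flip (R : realType) M p (F : {ffun 'I_M -> bool} -> R) :
  \sum_g F g = \sum_g F (flip p g).
Proof. by rewrite (reindex_inj (inv_inj (@flipK M p))). Qed.

Lemma sum_sg1 (R : realType) M (p : 'I_M) : \sum_(g : {ffun 'I_M -> bool}) (sgR (g p) : R) = 0.
Proof.
have E := @sum_flip R M p (fun g => (sgR (g p) : R)).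
have : \sum_(g : {ffun 'I_M -> bool}) (sgR (flip p g p) : R) = - \sum_(g : {ffun 'I_M -> bool}) (sgR (g p) : R).
  rewrite -sumrN; apply: eq_bigr => g _.
  by rewrite /flip ffunE eqxx /sgR; case: (g p) => //; rewrite opprK.
rewrite -E => h; lra.
Qed.

Lemma sum_sg2 (R : realType) M (p q : 'I_M) : q != p ->
  \sum_(g : {ffun 'I_M -> bool}) (sgR (g p) * sgR (g q) : R) = 0.
Proof.
move=> qp.
have E := @sum_flip R M p (fun g => (sgR (g p) * sgR (g q) : R)).
have : \sum_(g : {ffun 'I_M -> bool}) (sgR (flip p g p) * sgR (flip p g q) : R)
        = - \sum_(g : {ffun 'I_M -> bool}) (sgR (g p) * sgR (g q) : R).
  rewrite -sumrN; apply: eq_bigr => g _.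
  rewrite /flip !ffunE eqxx (negbTE qp) /sgR; case: (g p); case: (g q) => /=; ring.
rewrite -E => h; lra.
Qed.

Lemma pair_avg (R : realType) M (c : R) (p q : 'I_M) :
  \sum_(g : {ffun 'I_M -> bool}) (1 + c * sgR (g p)) * (1 + c * sgR (g q)) =
  (#|{: {ffun 'I_M -> bool}}|)%:R * (1 + c ^+ 2 * (p == q)%:R).
Proof.
have e : forall g : {ffun 'I_M -> bool}, (1 + c * sgR (g p)) * (1 + c * sgR (g q)) =
   1 + (c * sgR (g p) + (c * sgR (g q) + c ^+ 2 * (sgR (g p) * sgR (g q)))).
  by move=> g; ring.
under eq_bigr do rewrite e.
rewrite !big_split /= -!mulr_sumr !sum_sg1 !mulr0 !add0r sumr_const.
case: (eqVneq q p) => [->|qp].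
  have -> : \sum_(g : {ffun 'I_M -> bool}) (sgR (g p) * sgR (g p) : R) = \sum_(g : {ffun 'I_M -> bool}) 1.
    by apply: eq_bigr => g _; rewrite /sgR; case: (g p); ring.
  by rewrite sumr_const mulr1 mulrDr mulr1 [_ * c ^+ 2]mulrC.
by rewrite sum_sg2 // mulr0 addr0 addr0 mulr1.
Qed.
Definition idx (N : nat) (x : int) : 'I_(N + N).+1 := inord (absz (x + N%:Z)).

Lemma hvalE (R : realType) N (h : env N) i x : @hval R N h i x = sgR (h i (idx N x)).
Proof. by []. Qed.

Lemma wpos_bound N (w : walk N) n : `|wpos w n| <= N%:Z.
Proof.
rewrite /wpos; apply: le_trans (ler_norm_sum _ _ _) _.
rewrite big_mkcond /=.
apply: le_trans (_ : \sum_(i < N) (1 : int) <= _).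
  apply: ler_sum => i _; case: (i < n)%N; last by [].
  by case: (w i); rewrite ?normrN normr1.
by rewrite sumr_const card_ord natz.
Qed.

Lemma idx_eq N (x y : int) : `|x| <= N%:Z -> `|y| <= N%:Z -> (idx N x == idx N y) = (x == y).
Proof.
move=> hx hy; apply/eqP/eqP => [E|->] //.
move: hx hy; rewrite !ler_norml => /andP [hx1 hx2] /andP [hy1 hy2].
have bx : (absz (x + N%:Z)%R < (N + N).+1)%N by lia.
have b_y : (absz (y + N%:Z)%R < (N + N).+1)%N by lia.
move: E; rewrite /idx => /(congr1 (@nat_of_ord _)); rewrite !inordK //.
lia.
Qed.
Definition Kc (N : nat) : nat := #|{: {ffun 'I_(N + N).+1 -> bool}}|.

Lemma card_env N : #|{: env N}| = (Kc N ^ N)%N.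
Proof. by rewrite /env card_ffun card_ord. Qed.

Lemma env_sum (R : realType) N (c : R) (x y : 'I_N -> int) :
  \sum_(h : env N) \prod_(i < N) ((1 + c * hval h i (x i)) * (1 + c * hval h i (y i))) =
  (Kc N)%:R ^+ N * \prod_(i < N) (1 + c ^+ 2 * (idx N (x i) == idx N (y i))%:R).
Proof.
pose F := fun (i : 'I_N) (g : {ffun 'I_(N + N).+1 -> bool}) =>
  (1 + c * sgR (g (idx N (x i)))) * (1 + c * sgR (g (idx N (y i)))).
have -> : \sum_(h : env N) \prod_(i < N) ((1 + c * hval h i (x i)) * (1 + c * hval h i (y i))) =
    \sum_(h : {ffun 'I_N -> {ffun 'I_(N + N).+1 -> bool}}) \prod_(i < N) F i (h i) by [].
rewrite -bigA_distr_bigA /=.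
rewrite /F; under eq_bigr do rewrite pair_avg.
rewrite big_split /= prodr_const card_ord.
by [].
Qed.
Definition Zg {R : realType} N (c : R) (gam : int -> R) (h : env N) : R :=
  (2%:R ^- N) * \sum_(w : walk N) (\prod_(i < N) (1 + c * hval h i (wpos w i.+1))) * gam (wpos w N).

Lemma EQ_Zg (R : realType) N (c : R) (gam : int -> R) :
  EQ (fun h => Zg N c gam h ^+ 2) = V (c ^+ 2) (fun x y => gam x * gam y) N 0 0.
Proof.
pose A := fun (h : env N) (w : walk N) => \prod_(i < N) (1 + c * hval h i (wpos w i.+1)).
have sq : forall h, Zg N c gam h ^+ 2 = (2%:R ^- N) ^+ 2 *
    \sum_(w : walk N) \sum_(w' : walk N) (gam (wpos w N) * gam (wpos w' N)) * (A h w * A h w').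
  move=> h; rewrite /Zg exprMn; congr (_ * _); rewrite expr2 mulr_suml; apply: eq_bigr => w _.
  rewrite mulr_sumr; apply: eq_bigr => w' _; rewrite /A; ring.
have inner : forall w w' : walk N,
    \sum_(h : env N) (gam (wpos w N) * gam (wpos w' N)) * (A h w * A h w') =
    (Kc N)%:R ^+ N * ((\prod_(i < N) (1 + c ^+ 2 * ceq (0 + wpos w i.+1) (0 + wpos w' i.+1)))
      * (gam (0 + wpos w N) * gam (0 + wpos w' N))).
  move=> w w'; rewrite -mulr_sumr /A.
  under eq_bigr do rewrite -big_split /=.
  rewrite (@env_sum R N c (fun i : 'I_N => wpos w i.+1) (fun i : 'I_N => wpos w' i.+1)).
  rewrite /ceq !add0r mulrCA [X in _ = _ * X]mulrC; congr (_ * (_ * _)).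
  apply: eq_bigr => i _; rewrite idx_eq ?wpos_bound // (add0r (wpos w i.+1)) (add0r (wpos w' i.+1)).
  by [].
have E1 : \sum_(h : env N) Zg N c gam h ^+ 2 = (2%:R ^- N) ^+ 2 *
   \sum_(w : walk N) \sum_(w' : walk N) (Kc N)%:R ^+ N *
      ((\prod_(i < N) (1 + c ^+ 2 * ceq (0 + wpos w i.+1) (0 + wpos w' i.+1)))
      * (gam (0 + wpos w N) * gam (0 + wpos w' N))).
  under eq_bigr do rewrite sq.
  rewrite -mulr_sumr; congr (_ * _); rewrite exchange_big; apply: eq_bigr => w1 _.
  rewrite exchange_big; apply: eq_bigr => w2 _; exact: inner.
rewrite /EQ E1.
under eq_bigr do rewrite -mulr_sumr.
rewrite -mulr_sumr -/(WS (c ^+ 2) (fun x y => gam x * gam y) N 0 0) WS_V card_env natrX.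
have K0 : ((Kc N)%:R : R) != 0.
  by rewrite pnatr_eq0 /Kc card_ffun expn_eq0 card_ord card_bool.
have -> : (4%:R ^+ N : R) = (2%:R ^+ N) ^+ 2.
  by rewrite -exprM mulnC exprM [2%:R ^+ 2]expr2 -natrM.
have h2 : (2%:R ^+ N : R) != 0 by rewrite expf_neq0 // pnatr_eq0.
have hK : ((Kc N)%:R ^+ N : R) != 0 by rewrite expf_neq0.
by field; rewrite h2 hK.
Qed.
Lemma Zpart_Zg (R : realType) N (c : R) (h : env N) : Zpart c h = Zg N c (fun _ => 1) h.
Proof. by rewrite /Zpart /Zg; congr (_ * _); apply: eq_bigr => w _; rewrite mulr1. Qed.

Lemma Kpart_Zg (R : realType) N (c : R) (h : env N) :
  Kpart c h = Zg N c (fun x => (x%:~R : R) ^+ 2) h.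
Proof. by []. Qed.

Theorem proposition1 (R : realType) :
  exists c1 : R, 0 < c1 /\
  forall c : nat -> R,
    (forall N, 0 < c N) ->
    (fun N : nat => c N ^+ 2 * Num.sqrt (N%:R)) @ \oo --> (0 : R) ->
    forall N : nat, (1 <= N)%N ->
      EQ (fun h : env N => Zpart (c N) h ^+ 2)
        <= \sum_(0 <= n < N.+1) (c1 * c N ^+ 2 * Num.sqrt (N%:R)) ^+ n
   /\ EQ (fun h : env N => Kpart (c N) h ^+ 2)
        <= (N%:R) ^+ 2 * \sum_(0 <= n < N.+1) (c1 * c N ^+ 2 * Num.sqrt (N%:R)) ^+ n.
Proof.
exists 8%:R; split; first by rewrite ltr0n.
move=> c _ _ N _.
set u := c N ^+ 2.
have u0 : 0 <= u by rewrite /u sqr_ge0.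
have ey : 8%:R * c N ^+ 2 * Num.sqrt (N%:R) = 4%:R * (2%:R * u * Num.sqrt (N%:R)).
  by rewrite /u; ring.
rewrite ey; split.
- have -> : (fun h : env N => Zpart (c N) h ^+ 2) = (fun h => Zg N (c N) (fun _ => 1) h ^+ 2).
    by apply/funext => h; rewrite Zpart_Zg.
  rewrite EQ_Zg.
  have -> : (fun _ _ : int => (1 : R) * 1) = @one2 R by apply/funext => x; apply/funext => y; rewrite mulr1.
  exact: (@partI R u N u0).
- have -> : (fun h : env N => Kpart (c N) h ^+ 2) =
      (fun h => Zg N (c N) (fun x => (x%:~R : R) ^+ 2) h ^+ 2) by [].
  rewrite EQ_Zg.
  exact: (@partII R u N u0).
Qed.
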